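(* Let $\mathscr{T}$ be a connected spanning set of pure states in a finite-dimensional Hilbert space $\mathcal{H}$. Then any maximal connected linearly independent set contained in $\mathscr{T}$ is a connected basis of $\mathcal{H}$.
   Context: The transition graph of a set $\mathscr{T}=\{|\psi_j\rangle\}$ of pure states has vertices the states, with two distinct vertices adjacent iff their inner product is nonzero; $\mathscr{T}$ is connected if this graph is connected. A connected spanning set is a connected set spanning $\mathcal{H}$; a connected linearly independent set (CLIS) is a connected, linearly independent set; a connected basis is a CLIS spanning $\mathcal{H}$. A CLIS contained in $\mathscr{T}$ is maximal if it is not properly contained in any other CLIS contained in $\mathscr{T}$. *)

(* Defs.v *)
(* The finite-dimensional Hilbert space H is modelled as
   C^n (column vectors 'cV[C]_n) with the standard inner product
   <u|v> = \sum_i conj(u_i) v_i, over an arbitrary numClosedFieldType C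
   (which includes the complex numbers). *)
From HB Require Import structures.
From mathcomp Require Import all_boot all_order all_algebra.
Set Implicit Arguments. Unset Strict Implicit. Unset Printing Implicit Defensive.
Import Order.TTheory GRing.Theory Num.Theory.
Local Open Scope ring_scope.

Section QDefs.
Variables (C : numClosedFieldType) (n : nat).
Notation vec := 'cV[C]_n.

Definition inner (u v : vec) : C := \sum_(i < n) (u i 0)^* * v i 0.

Definition adj (u v : vec) : bool := (u != v) && (inner u v != 0).

Definition qset := vec -> Prop.

Definition subqset (A B : qset) : Prop := forall x, A x -> B x.

Definition pure_states (S : qset) : Prop := forall x, S x -> inner x x = 1.

Definition connected (S : qset) : Prop :=
  forall u v, S u -> S v ->
    exists s : seq vec, (forall x, x \in s -> S x) /\ path adj u s /\ last u s = v.

Definition lin_indep (S : qset) : Prop :=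
  forall s : seq vec, uniq s -> (forall x, x \in s -> S x) -> free s.

Definition spanning (S : qset) : Prop :=
  exists s : seq vec, (forall x, x \in s -> S x) /\ (<<s>>%VS = fullv).

Definition connected_spanning_set (S : qset) : Prop := connected S /\ spanning S.
Definition CLIS (S : qset) : Prop := connected S /\ lin_indep S.
Definition connected_basis (S : qset) : Prop := CLIS S /\ spanning S.

Definition maximal_CLIS_in (T B : qset) : Prop :=
  subqset B T /\ CLIS B /\
  forall B' : qset, subqset B B' -> subqset B' T -> CLIS B' -> subqset B' B.

End QDefs.

(* Main.v *)
Require Import Defs.
From mathcomp Require Import all_boot all_order all_algebra.
From Stdlib Require Import Classical.
Set Implicit Arguments. Unset Strict Implicit. Unset Printing Implicit Defensive.
Import Order.TTheory GRing.Theory Num.Theory.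

Section Aux.
Local Open Scope ring_scope.
Variables (C : numClosedFieldType) (n : nat).
Local Notation vec := 'cV[C]_n.

Lemma innerC (u v : vec) : inner v u = (inner u v)^*.
Proof.
rewrite /inner rmorph_sum; apply: eq_bigr => i _.
rewrite rmorphM [LHS]mulrC; congr (_ * _); exact: (esym (conjCK _)).
Qed.

Lemma inner_span (z : vec) (s : seq vec) y :
  (forall b, b \in s -> inner z b = 0) -> y \in <<s>>%VS -> inner z y = 0.
Proof.
move=> H ys.
have -> := coord_span (X := in_tuple s) ys.
rewrite /inner.
under eq_bigr do rewrite summxE mulr_sumr.
rewrite exchange_big big1 // => i _.
under eq_bigr do rewrite mxE mulrCA.
rewrite -mulr_sumr.
have := H s`_i (mem_nth 0 (ltn_ord i)); rewrite /inner => ->.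
by rewrite mulr0.
Qed.

Lemma free_size (s : seq vec) : free s -> (size s <= n)%N.
Proof.
move/eqP <-.
apply: leq_trans (dimvS (subvf _)) _.
by rewrite dimvf /= dim_matrix [X in (X <= _)%N]muln1.
Qed.

Lemma finite_B (B : qset C n) : lin_indep B ->
  exists s, uniq s /\ (forall x, x \in s -> B x) /\ (forall x, B x -> x \in s).
Proof.
move=> LI; apply: NNPP => Hn.
have H : forall k, exists s : seq vec, uniq s /\ (forall x, x \in s -> B x) /\ size s = k.
  elim=> [|k [s [us [sB sz]]]]; first by exists [::].
  have [x Hx] : exists x, ~ (B x -> x \in s).
    apply: not_all_ex_not => Hall; apply: Hn; exists s; split=>//.
  have Bx : B x by apply: NNPP => nB; apply: Hx => /nB [].
  have xs : x \notin s by apply/negP => xs; apply: Hx.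
  exists (x :: s); split; first by rewrite /= xs us.
  split; last by rewrite /= sz.
  by move=> y; rewrite inE => /orP [/eqP->|/sB].
have [s [us [sB sz]]] := H n.+1.
have := free_size (LI s us sB).
by rewrite sz ltnn.
Qed.

Lemma cross (U : {vspace vec}) (P : vec -> Prop) x p :
  x \in U -> last x p \notin U -> (forall y, y \in p -> P y) -> path (@adj C n) x p ->
  exists y z, [/\ y \in U, z \notin U, P z & @adj C n y z].
Proof.
elim: p x => [|a p IH] x xU /=; first by rewrite xU.
move=> lU Hp /andP [xa pa].
case: (boolP (a \in U)) => aU.
  apply: (IH a aU lU) => // y yp; apply: Hp; by rewrite inE yp orbT.
exists x, a; split => //; apply: Hp; exact: mem_head.
Qed.

End Aux.

Theorem lemma4 (C : numClosedFieldType) (n : nat) (T B : qset C n) :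
  pure_states T -> connected_spanning_set T ->
  maximal_CLIS_in T B -> connected_basis B.
Proof.
move=> pureT [cT [t [tT tfull]]] [BT [[cB liB] maxB]].
split; first by split.
have [s [us [sB Bs]]] := finite_B liB.
exists s; split => //.
apply: NNPP => nfull.
have [t1 [t1T t1s]] : exists t1, T t1 /\ t1 \notin <<s>>%VS.
  case: (boolP (all (fun x => x \in <<s>>%VS) t)) => [/allP Ht | /allPn [x xt xs]];
    last by exists x; split => //; apply: tT.
  exfalso; apply: nfull; apply/eqP; rewrite eqEsubv subvf /= -tfull.
  by apply/span_subvP => x xt; exact: Ht.
have [z [zT [zs Hz]]] : exists z, T z /\ z \notin <<s>>%VS /\
    (forall b0, B b0 -> exists b, B b /\ adj b z /\ adj z b).
  case: (classic (exists b0, B b0)) => [[b0 Bb0]|nB]; last first.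
    exists t1; split => //; split => // b0 Bb0; exfalso; apply: nB; by exists b0.
  have [p [pT [pp pl]]] := cT b0 t1 (BT _ Bb0) t1T.
  have lp : last b0 p \notin <<s>>%VS by rewrite pl.
  have [y [z [yU zU zT yz]]] := cross (P := T) (memv_span (Bs _ Bb0)) lp pT pp.
  exists z; split => //; split => // _ _.
  have [b [bs bz]] : exists b, b \in s /\ (inner z b != 0)%R.
    apply: NNPP => nh; move/andP: yz => [_ iyz]; move: iyz.
    rewrite (innerC z y) (inner_span _ yU) ?conjC0 ?eqxx //.
    move=> b bs; apply/eqP; apply/negPn/negP => nz; apply: nh; by exists b.
  have bneq : b != z by apply/eqP => ebz; move: zU; rewrite -ebz memv_span.
  exists b; split; first exact: sB.
  split; rewrite /adj; apply/andP; split => //.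
  - by rewrite innerC conjC_eq0.
  - by rewrite eq_sym.
pose B' := fun x => B x \/ x = z.
have zB : B z.
  apply: (maxB B' (fun x Bx => or_introl Bx)); last by right.
  - by move=> x [/BT|->].
  split.
  + move=> u v [Bu|->] [Bv|->].
    * have [p [pB [pp pl]]] := cB u v Bu Bv.
      by exists p; split => // x xp; left; exact: pB.
    * have [b [Bb [bz zb]]] := Hz u Bu.
      have [p [pB [pp pl]]] := cB u b Bu Bb.
      exists (rcons p z); split.
        by move=> x; rewrite mem_rcons inE => /orP [/eqP->|/pB]; [right|left].
      by rewrite rcons_path pp pl bz last_rcons.
    * have [b [Bb [bz zb]]] := Hz v Bv.
      have [p [pB [pp pl]]] := cB b v Bb Bv.
      exists (b :: p); split.
        by move=> x; rewrite inE => /orP [/eqP->|/pB]; left.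
      by rewrite /= zb pp pl.
    * by exists [::].
  + move=> r ur rB'.
    have remB : forall x, x \in rem z r -> B x.
      move=> x; rewrite (mem_rem_uniq _ ur) inE => /andP [xz xr].
      case: (rB' x xr) => // ex; by rewrite ex eqxx in xz.
    case: (boolP (z \in r)) => zr; last first.
      apply: liB ur _ => x xr; case: (rB' x xr) => // ex.
      by rewrite -ex xr in zr.
    rewrite (perm_free (perm_to_rem zr)) free_cons; apply/andP; split.
      have sub : (<<rem z r>> <= <<s>>)%VS by apply: sub_span => x /remB /Bs.
      by apply: contra zs => /(subvP sub).
    by apply: liB; [exact: rem_uniq | exact: remB].
by move: zs; rewrite memv_span // Bs.
Qed.
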